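(* Let $(\Omega,\Sigma,\mu;\phi)$ be a bimeasurable measure preserving dynamical system. Then for every $A\in\Sigma$ the minimal invariant superset $A^*$ belongs to $\Sigma_{\mathrm{inv}}$ and \[A^*=\bigcup_{m\in\mathbb{N}_0}\phi^{-m}\Bigl(\bigcup_{n\in\mathbb{N}_0}\phi^n(A)\Bigr),\qquad \mu\Bigl(A^*\,\triangle\,\bigcup_{n\in\mathbb{N}_0}\phi^n(A)\Bigr)=0.\]
   Context: A measure preserving dynamical system $(\Omega,\Sigma,\mu;\phi)$ is a probability space with a measurable map $\phi\colon\Omega\to\Omega$ such that $\mu(\phi^{-1}(A))=\mu(A)$ for all $A\in\Sigma$; it is bimeasurable if $\phi^{-1}(A),\phi(A)\in\Sigma$ for all $A\in\Sigma$. $\Sigma_{\mathrm{inv}}=\{A\in\Sigma:\phi^{-1}(A)=A\}$. For $A\subseteq\Omega$, the minimal invariant superset $A^*$ is the intersection of all sets $B\subseteq\Omega$ with $A\subseteq B$ and $\phi^{-1}(B)=B$. *)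

(* Defs.v *)
From HB Require Import structures.
From mathcomp Require Import all_boot all_order all_algebra.
From mathcomp Require Import all_classical all_reals all_analysis.
Set Implicit Arguments. Unset Strict Implicit. Unset Printing Implicit Defensive.
Import Order.TTheory GRing.Theory Num.Theory.
Local Open Scope classical_set_scope.
Local Open Scope ring_scope.

Definition measure_preserving {d} {R : realType} {T : measurableType d}
  (mu : probability T R) (phi : T -> T) : Prop :=
  measurable_fun setT phi /\
  (forall A : set T, measurable A -> mu (phi @^-1` A) = mu A).

Definition bimeasurable {d} {T : measurableType d} (phi : T -> T) : Prop :=
  forall A : set T, measurable A ->
    measurable (phi @^-1` A) /\ measurable (phi @` A).

Definition min_inv_superset {T : Type} (phi : T -> T) (A : set T) : set T :=
  \bigcap_(B in [set B : set T | A `<=` B /\ phi @^-1` B = B]) B.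

Definition symdiff {T : Type} (X Y : set T) : set T := (X `\` Y) `|` (Y `\` X).

(* Main.v *)
Require Import Defs.
From HB Require Import structures.
From mathcomp Require Import all_boot all_order all_algebra.
From mathcomp Require Import all_classical all_reals all_analysis.
Local Open Scope classical_set_scope.
Local Open Scope ring_scope.

Theorem lemma3p5 (d : measure_display) (R : realType) (T : measurableType d)
  (mu : probability T R) (phi : T -> T) :
  measure_preserving mu phi -> bimeasurable phi ->
  forall A : set T, measurable A ->
    (measurable (min_inv_superset phi A) /\
     phi @^-1` (min_inv_superset phi A) = min_inv_superset phi A) /\
    min_inv_superset phi A =
      \bigcup_m (iter m phi) @^-1` (\bigcup_n (iter n phi) @` A) /\
    mu (symdiff (min_inv_superset phi A) (\bigcup_n (iter n phi) @` A)) = 0%E.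
Proof.
move=> [mphi mpres] bim A mA.
set F := \bigcup_n (iter n phi) @` A.
set G := \bigcup_m (iter m phi) @^-1` F.
have FsubF : F `<=` phi @^-1` F.
  move=> x [n _ [a Aa <-]]; exists n.+1 => //; exists a => //.
have Ginv : phi @^-1` G = G.
  apply/seteqP; split => x.
    by move=> [m _ Hm]; exists m.+1 => //; move: Hm; rewrite /preimage /= -iterSr.
  move=> [[|m] _ /= Hm].
    by exists 0%N => //=; apply: FsubF.
  exists m => //; change (F (iter m phi (phi x))); rewrite -iterSr; exact: Hm.
have AG : A `<=` G by move=> x Ax; exists 0%N => //; exists 0%N => //; exists x.
have GE : min_inv_superset phi A = G.
  apply/seteqP; split.
    by move=> x Hx; apply: Hx; split.
  move=> x [m _ /= [n _ [a Aa Ha]]] B [AB BI].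
  have fwd : forall k y, B y -> B (iter k phi y).
    elim=> [//|k IH] y By /=.
    by have := IH _ By; rewrite -{1}BI.
  have bwd : forall k y, B (iter k phi y) -> B y.
    elim=> [//|k IH] y H; have := IH (phi y); rewrite -iterSr => /(_ H) Hp.
    by rewrite -BI.
  by apply: (bwd m); rewrite -Ha; apply: fwd; apply: AB.
have mit : forall n, measurable (iter n phi @` A).
  elim=> [|n IH] /=.
    by rewrite image_id.
  have -> : iter n.+1 phi @` A = phi @` (iter n phi @` A).
    by rewrite /= -image_comp.
  exact: (bim _ IH).2.
have mF : measurable F by apply: bigcup_measurable => k _; exact: mit.
have mpre : forall m X, measurable X -> measurable (iter m phi @^-1` X).
  elim=> [|m IH] X mX //=.
  have -> : iter m.+1 phi @^-1` X = iter m phi @^-1` (phi @^-1` X).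
    by apply/seteqP; split => y /=.
  by apply: IH; exact: (bim _ mX).1.
have mupre : forall m, mu (iter m phi @^-1` F) = mu F.
  elim=> [//|m IH].
  have -> : iter m.+1 phi @^-1` F = phi @^-1` (iter m phi @^-1` F).
    by apply/seteqP; split => y; rewrite /preimage /= -iterSr.
  by rewrite mpres ?IH //; apply: mpre.
have mG : measurable G by apply: bigcup_measurable => k _; exact: mpre.
rewrite GE; split; first by split.
split => //.
have FG : F `<=` G by move=> x Fx; exists 0%N.
have -> : symdiff G F = \bigcup_m (iter m phi @^-1` F `\` F).
  apply/seteqP; split => x.
    move=> [[[m _ Hm] nF]|[Fx nG]]; last by exfalso; apply: nG; apply: FG.
    by exists m.
  by move=> [m _ [Hm nF]]; left; split => //; exists m.
apply: measure_negligible.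
  by apply: bigcup_measurable => k _; apply: measurableD => //; exact: mpre.
apply: negligible_bigcup => k.
exists (iter k phi @^-1` F `\` F); split => //.
  by apply: measurableD => //; exact: mpre.
rewrite measureD //; last by rewrite (Order.POrderTheory.le_lt_trans (probability_le1 _ _)) ?ltry //; exact: mpre.
  have -> : iter k phi @^-1` F `&` F = F.
    apply/seteqP; split => x; first by case.
    move=> Fx; split => //.
    elim: k {mupre} => [//|k IH] /=.
    by apply: FsubF.
  transitivity (mu F - mu F)%E; first by congr (_ - _)%E; exact: mupre k.
  by rewrite subee // fin_num_measure.
exact: mpre.
Qed.
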